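(* Let $\nu$ be a partition of $n$ with at most $N$ parts and $T$ a standard tableau of shape $\nu$. Then the rational function $Z_\nu(u)=(\mathrm{tr}^{\otimes n}\otimes\mathrm{id})(F_T(u))$ takes values in $Z(\mathfrak g)$, the ring of invariants of $U(\mathfrak g)$ under the adjoint action of $G$.
   Context: $M=\lfloor N/2\rfloor$. Index set $I=\{-M,\dots,-1,1,\dots,M\}$ if $N=2M$, $I=\{-M,\dots,-1,0,1,\dots,M\}$ if $N=2M+1$; $e_i$ ($i\in I$) basis of $\mathbb C^N$, $E_{ij}$ matrix units ($E_{ij}e_k=\delta_{jk}e_i$). $G$ is either $O_N$ (the subgroup of $GL_N$ preserving $\langle e_i,e_j\rangle=\delta_{i,-j}$) or $Sp_N$, $N$ even (preserving $\langle e_i,e_j\rangle=\delta_{i,-j}\operatorname{sgn}i$), and $\mathfrak g\subset\mathfrak{gl}_N$ its Lie algebra. $\varepsilon_{ij}=\operatorname{sgn}i\operatorname{sgn}j$ for $Sp_N$, $1$ for $O_N$; $F_{ij}=E_{ij}-\varepsilon_{ij}E_{-j,-i}\in\mathfrak g$; $\eta=\frac12$ for $\mathfrak{so}_N$, $-\frac12$ for $\mathfrak{sp}_N$. $F(u)=-u-\eta+\sum_{i,j\in I}E_{ij}\otimes F_{ji}\in\mathrm{End}(\mathbb C^N)\otimes U(\mathfrak g)[u]$; $\iota_p(X)=1^{\otimes(p-1)}\otimes X\otimes 1^{\otimes(n-p)}$; $F_p(u)=(\iota_p\otimes\mathrm{id})F(u)$; $Q=\sum_{i,j}\varepsilon_{ij}E_{ij}\otimes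 E_{-i,-j}$, $Q_{pq}=(\iota_p\otimes\iota_q)(Q)$. For a standard tableau $T$ of shape $\nu$ (filling by $1,\dots,n$ increasing along rows and columns), $c_p=k-l$ if $p$ lies in column $k$ and row $l$. $W_\nu$ is the irreducible $S_n$-module labelled by $\nu$ with invariant inner product; $w_T$ is the unit Young basis vector associated to $T$ via the chain $S_1\subset\dots\subset S_n$ (the one-dimensional subspace $W_T$ lies, for each $p$, in an irreducible $S_p$-submodule of the type given by the shape of the entries $1,\dots,p$ of $T$). $\Phi_T=\frac{\dim W_\nu}{n!}\sum_{\sigma\in S_n}\langle w_T,\sigma w_T\rangle\sigma$, and $Y_T\in\mathrm{End}(\mathbb C^N)^{\otimes n}$ its image under permutation of tensor factors. $F_T(u)=(Y_T\otimes1)\prod_{p=1}^n\big(1+\frac{(Q_{1p}+\dots+Q_{p-1,p})\otimes1}{2u+c_p}\big)F_p(u+c_p)\in\mathrm{End}(\mathbb C^N)^{\otimes n}\otimes U(\mathfrak g)(u)$ with factors ordered left to right; $\mathrm{tr}$ is the matrix trace. *)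

(* Defs.v *)
From HB Require Import structures.
From mathcomp Require Import all_boot all_order all_algebra all_fingroup.
From mathcomp Require Import complex.
From mathcomp Require Import Rstruct.
Set Implicit Arguments. Unset Strict Implicit. Unset Printing Implicit Defensive.
Import Order.TTheory GRing.Theory Num.Theory.
Local Open Scope ring_scope.

Definition CC : Type := (Rdefinitions.R)[i].
HB.instance Definition _ := GRing.Field.on CC.

(* Index set I = {-M..-1,(0),1..M} encoded by 'I_N, in increasing order. *)
Definition ival (N : nat) (k : 'I_N) : int :=
  if odd N then k%:Z - (N./2)%:Z
  else if (k < N./2)%N then k%:Z - (N./2)%:Z else k%:Z - (N./2)%:Z + 1.
(* The index -i corresponds to rev_ord i. *)
Definition isg (N : nat) (k : 'I_N) : int := Num.sg (ival k).

Inductive gkind := Ortho | Sympl.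

Definition eps (kd : gkind) (N : nat) (i j : 'I_N) : CC :=
  match kd with Ortho => 1 | Sympl => (isg i * isg j)%:~R end.
Definition eta (kd : gkind) : CC :=
  match kd with Ortho => 2%:R^-1 | Sympl => - 2%:R^-1 end.

Definition Jform (kd : gkind) (N : nat) : 'M[CC]_N :=
  \matrix_(i, j) if rev_ord i == j then
                   (match kd with Ortho => 1 | Sympl => (isg i)%:~R end)
                 else 0.

Definition in_G (kd : gkind) (N : nat) (g : 'M[CC]_N) : bool :=
  (g \in unitmx) && (g^T *m Jform kd N *m g == Jform kd N).
Definition in_lie (kd : gkind) (N : nat) (X : 'M[CC]_N) : bool :=
  X^T *m Jform kd N + Jform kd N *m X == 0.

Definition Fmx (kd : gkind) (N : nat) (i j : 'I_N) : 'M[CC]_N :=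
  delta_mx i j - eps kd i j *: delta_mx (rev_ord j) (rev_ord i).

Definition Adj (N : nat) (g X : 'M[CC]_N) : 'M[CC]_N := g *m X *m invmx g.

(* rho : g -> A is a homomorphism of Lie algebras into the associative
   C-algebra A (values of rho outside g are irrelevant). *)
Definition is_lie_hom (kd : gkind) (N : nat) (A : algType CC)
    (rho : 'M[CC]_N -> A) : Prop :=
  (forall (a : CC) (X Y : 'M[CC]_N), in_lie kd X -> in_lie kd Y ->
      rho (a *: X + Y) = a *: rho X + rho Y) /\
  (forall X Y : 'M[CC]_N, in_lie kd X -> in_lie kd Y ->
      rho (X *m Y - Y *m X) = rho X * rho Y - rho Y * rho X).

(* End(C^N)^{\otimes n} (x) A, as (N^n x N^n)-matrices with entries in A,
   rows/columns indexed by multi-indices k : 'I_n -> 'I_N.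
   M a b is the coefficient of e_a (x) e_b^* . *)
Section Tensor.
Variables (A : algType CC) (N n : nat).

Definition tidx := {ffun 'I_n -> 'I_N}.
Definition tmx := tidx -> tidx -> A.

Definition tmul (M1 M2 : tmx) : tmx := fun a b => \sum_k M1 a k * M2 k b.
Definition tone : tmx := fun a b => (a == b)%:R.
Definition tadd (M1 M2 : tmx) : tmx := fun a b => M1 a b + M2 a b.
Definition tscale (c : CC) (M : tmx) : tmx := fun a b => c *: M a b.
Definition tsum (I : finType) (P : pred I) (F : I -> tmx) : tmx :=
  fun a b => \sum_(i | P i) F i a b.
Definition tprod (I : finType) (F : I -> tmx) : tmx :=
  \big[tmul/tone]_(i : I) F i.   (* ordered product, left to right *)

(* iota_p(X) : X acting on the p-th tensor factor *)
Definition tiota (p : 'I_n) (X : 'M[CC]_N) : tmx := fun a b =>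
  if [forall q, (q != p) ==> (a q == b q)] then X (a p) (b p) *: 1 else 0.

(* action of sigma in S_n by permutation of tensor factors:
   e_{b_1}(x)...(x)e_{b_n} |-> e_{b_{s^-1 1}}(x)...(x)e_{b_{s^-1 n}} *)
Definition tperm_op (s : 'S_n) : tmx := fun a b =>
  (a == [ffun k => b ((s^-1)%g k)])%:R.

Definition tQ (kd : gkind) (p q : 'I_n) : tmx :=
  tsum xpredT (fun ij : 'I_N * 'I_N =>
    tscale (eps kd ij.1 ij.2)
      (tmul (tiota p (delta_mx ij.1 ij.2))
            (tiota q (delta_mx (rev_ord ij.1) (rev_ord ij.2))))).

Definition tF (kd : gkind) (rho : 'M[CC]_N -> A) (u : CC) (p : 'I_n) : tmx :=
  tadd (tscale (- u - eta kd) tone)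
       (tsum xpredT (fun ij : 'I_N * 'I_N => fun a b =>
          tiota p (delta_mx ij.1 ij.2) a b * rho (Fmx kd ij.2 ij.1))).

(* Partitions and standard tableaux.  A tableau T : 'I_n -> nat * nat gives
   (row, column) (0-based) of each entry p (entry p+1 in 1-based terms). *)
Definition is_partition (nu : seq nat) : bool :=
  sorted geq nu && all (fun x => 0 < x)%N nu && (sumn nu == n).

Definition is_std_tableau (nu : seq nat) (T : 'I_n -> nat * nat) : Prop :=
  [/\ (forall p, ((T p).1 < size nu)%N /\ ((T p).2 < nth 0%N nu (T p).1)%N),
      injective T,
      (forall r c, (r < size nu)%N -> (c < nth 0%N nu r)%N -> exists p, T p = (r, c)),
      (forall p q, (T p).1 = (T q).1 -> ((T p).2 < (T q).2)%N -> (p < q)%N) &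
      (forall p q, (T p).2 = (T q).2 -> ((T p).1 < (T q).1)%N -> (p < q)%N)].

Definition content (T : 'I_n -> nat * nat) (p : 'I_n) : int :=
  (T p).2%:Z - (T p).1%:Z.

Definition tJM (p : 'I_n) : tmx :=
  tsum (fun q : 'I_n => (q < p)%N) (fun q => tperm_op (tperm q p)).

(* Y_T: image of the primitive idempotent Phi_T, written through the
   Jucys-Murphy elements:  Phi_T = prod_p prod_{a in [-p',p'], a <> c_p}
   (x_p - a)/(c_p - a), where p' = p (0-based) is the largest |content|
   possible for box p. *)
Definition YT (T : 'I_n -> nat * nat) : tmx :=
  tprod (fun p : 'I_n =>
    \big[tmul/tone]_(a <- [seq (i%:Z - p%:Z)%R | i <- iota 0 (p + p).+1]
                     | a != content T p)
       tscale ((content T p - a)%:~R^-1) (tadd (tJM p) (tscale (- a%:~R) tone))).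

Definition FT (kd : gkind) (rho : 'M[CC]_N -> A) (T : 'I_n -> nat * nat)
    (u : CC) : tmx :=
  tmul (YT T)
    (tprod (fun p : 'I_n =>
       tmul (tadd tone
               (tscale ((2%:R * u + (content T p)%:~R)^-1)
                  (tsum (fun q : 'I_n => (q < p)%N) (fun q => tQ kd q p))))
            (tF kd rho (u + (content T p)%:~R) p))).

Definition Zeval (kd : gkind) (rho : 'M[CC]_N -> A) (T : 'I_n -> nat * nat)
    (u : CC) : A :=
  \sum_a FT kd rho T u a a.

End Tensor.

(* Main.v *)
Require Import Defs.
From HB Require Import structures.
From mathcomp Require Import all_boot all_order all_algebra all_fingroup.
From mathcomp Require Import complex.
From mathcomp Require Import Rstruct.
From mathcomp Require Import zify.
From mathcomp Require Import ring.
From Stdlib Require Import FunctionalExtensionality.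
Import GRing.Theory Num.Theory.
Local Open Scope ring_scope.


Section TensorAlg.
Variables (A : algType CC) (N n : nat).
Local Notation tm := (tmx A N n).
Local Notation tI := (@tone A N n).

Lemma tmx_ext (M1 M2 : tm) : (forall a b, M1 a b = M2 a b) -> M1 = M2.
Proof. move=> H; apply: functional_extensionality => a;
  apply: functional_extensionality => b; exact: H. Qed.

Lemma tmulA (M1 M2 M3 : tm) : tmul M1 (tmul M2 M3) = tmul (tmul M1 M2) M3.
Proof.
apply: tmx_ext => a b; rewrite /tmul.
under [RHS]eq_bigr do rewrite mulr_suml.
rewrite exchange_big; apply: eq_bigr => k _; rewrite mulr_sumr.
by apply: eq_bigr => l _; rewrite mulrA.
Qed.

Lemma tmul1l (M : tm) : tmul tI M = M.
Proof.
apply: tmx_ext => a b; rewrite /tmul /tone (bigD1 a) //= eqxx mul1r big1 ?addr0 //.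
by move=> k /negbTE; rewrite eq_sym => ->; rewrite mul0r.
Qed.

Lemma tmul1r (M : tm) : tmul M tI = M.
Proof.
apply: tmx_ext => a b; rewrite /tmul /tone (bigD1 b) //= eqxx mulr1 big1 ?addr0 //.
by move=> k /negbTE ->; rewrite mulr0.
Qed.

Lemma tmulDl (M1 M2 M : tm) : tmul (tadd M1 M2) M = tadd (tmul M1 M) (tmul M2 M).
Proof.
apply: tmx_ext => a b; rewrite /tmul /tadd -big_split /=.
by apply: eq_bigr => k _; rewrite mulrDl.
Qed.

Lemma tmulDr (M1 M2 M : tm) : tmul M (tadd M1 M2) = tadd (tmul M M1) (tmul M M2).
Proof.
apply: tmx_ext => a b; rewrite /tmul /tadd -big_split /=.
by apply: eq_bigr => k _; rewrite mulrDr.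
Qed.

Lemma tmulZl c (M1 M : tm) : tmul (tscale c M1) M = tscale c (tmul M1 M).
Proof.
apply: tmx_ext => a b; rewrite /tmul /tscale scaler_sumr.
by apply: eq_bigr => k _; rewrite scalerAl.
Qed.

Lemma tmulZr c (M1 M : tm) : tmul M (tscale c M1) = tscale c (tmul M M1).
Proof.
apply: tmx_ext => a b; rewrite /tmul /tscale scaler_sumr.
by apply: eq_bigr => k _; rewrite scalerAr.
Qed.

Lemma tmul_suml (I : finType) (P : pred I) (F : I -> tm) (M : tm) :
  tmul (tsum P F) M = tsum P (fun i => tmul (F i) M).
Proof.
apply: tmx_ext => a b; rewrite /tmul /tsum.
under eq_bigr do rewrite mulr_suml.
by rewrite exchange_big.
Qed.

Lemma tmul_sumr (I : finType) (P : pred I) (F : I -> tm) (M : tm) :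
  tmul M (tsum P F) = tsum P (fun i => tmul M (F i)).
Proof.
apply: tmx_ext => a b; rewrite /tmul /tsum.
under eq_bigr do rewrite mulr_sumr.
by rewrite exchange_big.
Qed.

Definition intw (G M' M : tm) := tmul G M' = tmul M G.

Lemma intw_mul G M1' M1 M2' M2 : intw G M1' M1 -> intw G M2' M2 ->
  intw G (tmul M1' M2') (tmul M1 M2).
Proof.
rewrite /intw => h1 h2.
by rewrite tmulA h1 -tmulA h2 tmulA.
Qed.

Lemma intw_one G : intw G tI tI.
Proof. by rewrite /intw tmul1l tmul1r. Qed.

Lemma intw_add G M1' M1 M2' M2 : intw G M1' M1 -> intw G M2' M2 ->
  intw G (tadd M1' M2') (tadd M1 M2).
Proof. by rewrite /intw tmulDl tmulDr => -> ->. Qed.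

Lemma intw_scale G c M' M : intw G M' M -> intw G (tscale c M') (tscale c M).
Proof. by rewrite /intw tmulZl tmulZr => ->. Qed.

Lemma intw_sum G (I : finType) (P : pred I) (F' F : I -> tm) :
  (forall i, P i -> intw G (F' i) (F i)) -> intw G (tsum P F') (tsum P F).
Proof.
move=> h; rewrite /intw tmul_suml tmul_sumr.
apply: tmx_ext => a b; rewrite /tsum; apply: eq_bigr => i Pi.
by rewrite (h i Pi).
Qed.

Lemma intw_big G (I : Type) (r : seq I) (P : pred I) (F' F : I -> tm) :
  (forall i, P i -> intw G (F' i) (F i)) ->
  intw G (\big[@tmul A N n/tI]_(i <- r | P i) F' i)
         (\big[@tmul A N n/tI]_(i <- r | P i) F i).
Proof.
move=> h; apply: (big_ind2 (fun x y => intw G x y)) => //.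
  exact: intw_one.
by move=> *; apply: intw_mul.
Qed.

Definition tP (H : 'I_n -> 'M[CC]_N) : tm :=
  fun a b => (\prod_q H q (a q) (b q)) *: 1.

Lemma tP_mul (H1 H2 : 'I_n -> 'M[CC]_N) :
  tmul (tP H1) (tP H2) = tP (fun q => H1 q *m H2 q).
Proof.
apply: tmx_ext => a b; rewrite /tmul /tP /=.
under eq_bigr do rewrite -scalerAl mul1r scalerA.
rewrite -scaler_suml; congr (_ *: _).
under [RHS]eq_bigr do rewrite mxE.
rewrite bigA_distr_bigA /=.
by apply: eq_bigr => k _; rewrite -big_split.
Qed.

Definition ttr (M : tm) : A := \sum_a M a a.

Lemma ttr_tP (H : 'I_n -> 'M[CC]_N) (M : tm) :
  ttr (tmul (tP H) M) = ttr (tmul M (tP H)).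
Proof.
rewrite /ttr /tmul /tP exchange_big; apply: eq_bigr => a _.
apply: eq_bigr => k _.
by rewrite -scalerAl -scalerAr mul1r mulr1.
Qed.

Lemma ttr_intw (G Gi M' M : tm) (HG : 'I_n -> 'M[CC]_N) :
  G = tP HG -> tmul Gi G = tI -> tmul G Gi = tI ->
  intw G M' M -> ttr M' = ttr M.
Proof.
move=> -> h1 h2 hw.
by rewrite -[M']tmul1l -h1 -tmulA hw tmulA -ttr_tP tmulA h2 tmul1l.
Qed.


Lemma scalar1E (x y : 'I_N) : (1%:M : 'M[CC]_N) x y = (x == y)%:R.
Proof. by rewrite mxE. Qed.

Lemma tP_one : tP (fun _ => 1%:M) = tI.
Proof.
apply: tmx_ext => a b; rewrite /tP /tone.
under eq_bigr do rewrite scalar1E.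
case: (pickP (fun q => a q != b q)) => [q hq | h].
  have -> : (a == b) = false.
    by apply/negbTE; apply: contra hq => /eqP ->.
  by rewrite (bigD1 q) //= (negbTE hq) mul0r scale0r.
have -> : a = b by apply/ffunP => q; move: (h q) => /= /negbFE /eqP.
by rewrite eqxx big1 ?scale1r // => q _; rewrite eqxx.
Qed.

Lemma tiota_tP (p : 'I_n) (X : 'M[CC]_N) :
  tiota A p X = tP (fun q => if q == p then X else 1%:M).
Proof.
apply: tmx_ext => a b; rewrite /tP /tiota (bigD1 p) //= eqxx.
case: (pickP (fun q => (q != p) && (a q != b q))) => [q /andP [hqp hq] | h].
  have -> : [forall q0, (q0 != p) ==> (a q0 == b q0)] = false.
    apply/negbTE/forallP => /(_ q); by rewrite hqp (negbTE hq).
  by rewrite (bigD1 q) //= (negbTE hqp) scalar1E (negbTE hq) mul0r mulr0 scale0r.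
have -> : [forall q0, (q0 != p) ==> (a q0 == b q0)].
  apply/forallP => q; apply/implyP => hqp; move: (h q) => /=.
  by rewrite hqp /= => /negbFE.
rewrite big1 ?mulr1 // => q hqp; rewrite (negbTE hqp) scalar1E.
by move: (h q) => /=; rewrite hqp /= => /negbFE ->.
Qed.

Lemma tperm_comm (h : 'M[CC]_N) (s : 'S_n) :
  tmul (tP (fun _ => h)) (tperm_op A s) = tmul (tperm_op A s) (tP (fun _ => h)).
Proof.
apply: tmx_ext => a b; rewrite /tmul /tP /tperm_op.
set c1 := [ffun k => b ((s^-1)%g k)].
set c2 := [ffun k => a (s k)].
rewrite (bigD1 c1) // [in RHS](bigD1 c2) //= eqxx mulr1.
have -> : a == [ffun k => c2 ((s^-1)%g k)].
  by apply/eqP/ffunP => k; rewrite !ffunE permKV.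
rewrite mul1r [X in _ + X]big1 ?addr0; last first.
  by move=> k /negbTE hk; rewrite hk mulr0.
rewrite [X in _ + X]big1 ?addr0; last first.
  move=> k hk; case: eqP => [ea|]; last by rewrite mul0r.
  case/eqP: hk; apply/ffunP => q; by rewrite /c2 ffunE ea ffunE permK.
congr (_ *: _).
rewrite (reindex_inj (@perm_inj _ s)) /=.
by apply: eq_bigr => q _; rewrite !ffunE permK.
Qed.

Definition trm (M : tm) (y : A) : tm := fun a b => M a b * y.

Lemma tmul_trm (M1 M : tm) y : tmul M1 (trm M y) = trm (tmul M1 M) y.
Proof.
apply: tmx_ext => a b; rewrite /tmul /trm mulr_suml.
by apply: eq_bigr => k _; rewrite mulrA.
Qed.

Lemma trm_tmul H (M : tm) y : tmul (trm M y) (tP H) = trm (tmul M (tP H)) y.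
Proof.
apply: tmx_ext => a b; rewrite /tmul /trm /tP mulr_suml.
apply: eq_bigr => k _; rewrite -mulrA -mulrA; congr (_ * _).
by rewrite -scalerAl -scalerAr mul1r mulr1.
Qed.

End TensorAlg.


Lemma ival_rev (N : nat) (x : 'I_N) : ~~ odd N ->
  ival (rev_ord x) = - ival x /\ ival x != 0.
Proof.
move=> hN; rewrite /ival (negbTE hN).
have hN2 : N = (N./2 + N./2)%N by rewrite -{1}(odd_double_half N) (negbTE hN) add0n addnn.
move: (ltn_ord x) => hx.
rewrite /= ; case: ifP => h1; case: ifP => h2; split; try lia.
Qed.

Definition sg (kd : gkind) {N : nat} (x : 'I_N) : CC :=
  match kd with Ortho => 1 | Sympl => (isg x)%:~R end.
Definition sig (kd : gkind) : CC := match kd with Ortho => 1 | Sympl => -1 end.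

Lemma sgsq (v : int) : v != 0 -> Num.sg v * Num.sg v = 1.
Proof. by move=> hv; rewrite -sgrM -expr2 gtr0_sg // exprn_even_gt0. Qed.

Section Sfacts.
Variables (kd : gkind) (N : nat).
Hypothesis hN : kd = Sympl -> ~~ odd N.

Lemma s_rev (x : 'I_N) : sg kd x * sg kd (rev_ord x) = sig kd.
Proof.
case: kd hN => [|] h /=; first by rewrite mulr1.
have [h1 h2] := ival_rev _ x (h erefl).
by rewrite /isg h1 sgrN -intrM mulrN sgsq.
Qed.

Lemma s_sq (x : 'I_N) : sg kd x * sg kd x = 1.
Proof.
case: kd hN => [|] h /=; first by rewrite mulr1.
have [h1 h2] := ival_rev _ x (h erefl).
by rewrite /isg -intrM sgsq.
Qed.

Lemma sig_sq : sig kd * sig kd = 1.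
Proof. by case: kd => /=; rewrite ?mulr1 ?mulrNN ?mulr1. Qed.

Lemma s_revE (x : 'I_N) : sg kd (rev_ord x) = sig kd * sg kd x.
Proof. by rewrite -(s_rev x) mulrC mulrA s_sq mul1r. Qed.

Lemma eps_s (i j : 'I_N) : eps kd i j = sg kd i * sg kd j.
Proof. by case: kd => /=; rewrite ?mulr1 // intrM. Qed.

Lemma JE (x y : 'I_N) : Jform kd N x y = if rev_ord x == y then sg kd x else 0.
Proof. by rewrite mxE. Qed.

End Sfacts.


Lemma sum_single {V : nmodType} {I : finType} {F : I -> V} y :
  (forall j, j != y -> F j = 0) -> \sum_j F j = F y.
Proof. by move=> h; rewrite (bigD1 y) //= big1 ?addr0. Qed.

Lemma rev_eq (N : nat) (x y : 'I_N) : (rev_ord x == y) = (x == rev_ord y).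
Proof. by apply/eqP/eqP => [<-|->]; rewrite rev_ordK. Qed.

Section GMat.
Variables (kd : gkind) (N : nat).
Hypothesis hN : kd = Sympl -> ~~ odd N.
Variable g : 'M[CC]_N.
Hypothesis hg : in_G kd g.

Local Notation J := (Jform kd N).
Local Notation s := (@sg kd N).
Local Notation σ := (sig kd).
Local Notation r := (@rev_ord N).

Lemma mulJ (Y : 'M[CC]_N) a b : (J *m Y) a b = s a * Y (r a) b.
Proof.
rewrite mxE (sum_single (r a)) ?JE ?eqxx // => i hi.
by rewrite JE eq_sym (negbTE hi) mul0r.
Qed.

Lemma mulmxJ (Y : 'M[CC]_N) a b : (Y *m J) a b = Y a (r b) * s (r b).
Proof.
rewrite mxE (sum_single (r b)) ?JE ?rev_ordK ?eqxx // => i hi.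
by rewrite JE rev_eq (negbTE hi) mulr0.
Qed.

Lemma JJ : J *m J = σ%:M.
Proof.
apply/matrixP => a b; rewrite mulJ JE rev_ordK mxE.
by case: eqP => _; rewrite ?mulr0 ?mulr1n ?s_rev.
Qed.

Definition gi : 'M[CC]_N := locked (σ *: (J *m g^T *m J)).
Lemma gi_def : gi = σ *: (J *m g^T *m J).
Proof. by rewrite /gi -lock. Qed.

Lemma gig : gi *m g = 1%:M.
Proof.
case/andP: hg => _ /eqP hJ.
have e : J *m g^T *m J *m g = J *m J.
  by rewrite -!mulmxA [g^T *m (J *m g)]mulmxA hJ.
by rewrite gi_def -scalemxAl e JJ scale_scalar_mx sig_sq.
Qed.

Lemma ggi : g *m gi = 1%:M.
Proof. exact: mulmx1C gig. Qed.

Lemma invg : invmx g = gi.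
Proof.
case/andP: hg => hu _.
by rewrite -[invmx g]mulmx1 -ggi mulmxA mulVmx // mul1mx.
Qed.

Lemma giE a b : gi a b = σ * s a * s (r b) * g (r b) (r a).
Proof.
rewrite gi_def mxE mulmxJ mulJ mxE; ring.
Qed.

Lemma gJgT : g *m J *m g^T = J.
Proof.
have e1 : g *m J *m g^T = σ *: (g *m J *m g^T *m (J *m J)).
  by rewrite JJ mul_mx_scalar scalerA sig_sq scale1r.
have e2 : g *m J *m g^T *m (J *m J) = g *m (J *m g^T *m J) *m J by rewrite !mulmxA.
by rewrite e1 e2 scalemxAl scalemxAr -gi_def ggi mul1mx.
Qed.


Lemma sum_gsg (M : 'M[CC]_N) y y' :
  (M *m J *m M^T) y y' = \sum_j M y j * s j * M y' (r j).
Proof.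
rewrite mxE (reindex_inj (@rev_ord_inj N)) /=; apply: eq_bigr => j _.
by rewrite mulmxJ !mxE rev_ordK.
Qed.

Lemma E1 y y' : \sum_j g j y * s j * g (r j) y' = if r y == y' then s y else 0.
Proof.
case/andP: hg => _ /eqP hJ.
have := sum_gsg g^T y y'; rewrite trmxK hJ JE => ->.
by apply: eq_bigr => j _; rewrite !mxE.
Qed.

Lemma E2 x x' : \sum_i g x i * s i * g x' (r i) = if r x == x' then s x else 0.
Proof. by rewrite -sum_gsg gJgT JE. Qed.


Lemma mxBE (M1 M2 : 'M[CC]_N) a b : (M1 - M2) a b = M1 a b - M2 a b.
Proof. by rewrite !mxE. Qed.
Lemma mxZE c (M : 'M[CC]_N) a b : (c *: M) a b = c * M a b.
Proof. by rewrite mxE. Qed.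
Lemma deltaE (i j a b : 'I_N) : (delta_mx i j : 'M[CC]_N) a b = ((a == i) && (b == j))%:R.
Proof. by rewrite mxE. Qed.

Lemma mul_delta_r (M : 'M[CC]_N) (i j x y : 'I_N) :
  (M *m delta_mx i j) x y = if y == j then M x i else 0.
Proof.
rewrite mxE (sum_single i) => [|k hk]; rewrite deltaE ?(negbTE hk) ?mulr0 //.
by rewrite eqxx /=; case: (y == j); rewrite ?mulr1 ?mulr0.
Qed.

Lemma mul_delta_l (M : 'M[CC]_N) (i j x y : 'I_N) :
  (delta_mx i j *m M) x y = if x == i then M j y else 0.
Proof.
rewrite mxE (sum_single j) => [|k hk]; rewrite deltaE ?(negbTE hk) ?andbF ?mul0r //.
by rewrite eqxx andbT; case: (x == i); rewrite ?mul1r ?mul0r.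
Qed.

Lemma mul_delta_lr (M M' : 'M[CC]_N) (i j x y : 'I_N) :
  (M *m delta_mx i j *m M') x y = M x i * M' j y.
Proof.
rewrite mxE (sum_single j) => [|k hk]; rewrite mul_delta_r ?(negbTE hk) ?mul0r //.
by rewrite eqxx.
Qed.

Lemma FAd j i : g *m Fmx kd j i *m gi =
  \sum_k \sum_l (g k j * gi i l) *: Fmx kd k l.
Proof.
apply/matrixP => a b.
rewrite /Fmx mulmxBr mulmxBl mxBE -(scalemxAr (eps kd j i) g) -(scalemxAl (eps kd j i)) mxZE !mul_delta_lr.
rewrite summxE; under eq_bigr => k _ do rewrite summxE.
under eq_bigr => k _ do under eq_bigr => l _ do rewrite mxZE mxBE mxZE !deltaE mulrBr.
under eq_bigr => k _ do rewrite sumrB.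
rewrite sumrB.
rewrite (sum_single a) => [|k hk]; last first.
  by rewrite big1 // => l _; rewrite eq_sym (negbTE hk) /= mulr0.
rewrite (sum_single b) => [|l hl]; last by rewrite eqxx eq_sym (negbTE hl) /= mulr0.
rewrite !eqxx mulr1.
rewrite (sum_single (r b)) => [|k hk]; last first.
  by rewrite big1 // => l _; rewrite [b == _]eq_sym rev_eq (negbTE hk) andbF mulr0 mulr0.
rewrite (sum_single (r a)) => [|l hl]; last by rewrite [a == _]eq_sym rev_eq (negbTE hl) /= mulr0 mulr0.
rewrite !rev_ordK !eqxx mulr1 !giE !eps_s // !rev_ordK.
rewrite (s_revE _ _ hN j) (s_revE _ _ hN a).
have h1 := s_sq _ _ hN j; have h2 := s_sq _ _ hN a; have h3 := sig_sq kd.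
congr (_ - _).
transitivity ((s j * s j) * (σ * σ) * (s i * s (r b) * g a (r i) * g (r b) j)); first ring.
rewrite h1 h3 !mul1r; symmetry.
transitivity ((s a * s a) * (σ * σ) * (s i * s (r b) * g a (r i) * g (r b) j)); first ring.
by rewrite h2 h3 !mul1r.
Qed.


Lemma natr_and (b1 b2 : bool) : ((b1 && b2)%:R : CC) = b1%:R * b2%:R.
Proof. by case: b1; case: b2; rewrite ?mulr1 ?mulr0. Qed.

Lemma lieF (i j : 'I_N) : in_lie kd (Fmx kd i j).
Proof.
apply/eqP/matrixP => a b.
rewrite [LHS]mxE mulmxJ mulJ [in RHS]mxE [(Fmx _ _ _)^T _ _]mxE /Fmx !mxBE !mxZE !deltaE.
rewrite !(inj_eq (@rev_ord_inj N)) !rev_eq !natr_and.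
have k1 : (b == r i)%:R * (a == j)%:R * (s (r b) - s a * eps kd i j) = 0 :> CC.
  case: (b =P r i) => [->|]; last by rewrite mul0r mul0r.
  case: (a =P j) => [->|]; last by rewrite mulr0 mul0r.
  by rewrite rev_ordK eps_s mulrCA s_sq // !mulr1 subrr mulr0.
have k2 : (b == j)%:R * (a == r i)%:R * (s a - eps kd i j * s (r b)) = 0 :> CC.
  case: (b =P j) => [->|]; last by rewrite mul0r mul0r.
  case: (a =P r i) => [->|]; last by rewrite mulr0 mul0r.
  rewrite eps_s !(s_revE _ _ hN) mulrA -[s i * s j * σ]mulrA [s j * σ]mulrC.
  by rewrite -!mulrA s_sq // mulr1 [s i * σ]mulrC subrr !mulr0.
transitivity ((b == r i)%:R * (a == j)%:R * (s (r b) - s a * eps kd i j) +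
  (b == j)%:R * (a == r i)%:R * (s a - eps kd i j * s (r b)) : CC).
  by ring.
by rewrite k1 k2 addr0.
Qed.

Lemma QI (x y x' y' : 'I_N) :
  \sum_(ij : 'I_N * 'I_N) eps kd ij.1 ij.2 *
     ((g *m delta_mx ij.1 ij.2) x y * (g *m delta_mx (r ij.1) (r ij.2)) x' y') =
  \sum_(ij : 'I_N * 'I_N) eps kd ij.1 ij.2 *
     ((delta_mx ij.1 ij.2 *m g) x y * (delta_mx (r ij.1) (r ij.2) *m g) x' y').
Proof.
rewrite -(pair_bigA _ (fun i j => eps kd i j *
     ((g *m delta_mx i j) x y * (g *m delta_mx (r i) (r j)) x' y'))).
rewrite -(pair_bigA _ (fun i j => eps kd i j *
     ((delta_mx i j *m g) x y * (delta_mx (r i) (r j) *m g) x' y'))) /=.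
have L : \sum_i \sum_j eps kd i j *
     ((g *m delta_mx i j) x y * (g *m delta_mx (r i) (r j)) x' y') =
     if y' == r y then s y * (if r x == x' then s x else 0) else 0.
  have inner : forall i, \sum_j eps kd i j *
     ((g *m delta_mx i j) x y * (g *m delta_mx (r i) (r j)) x' y') =
     eps kd i y * ((g *m delta_mx i y) x y * (g *m delta_mx (r i) (r y)) x' y').
    move=> i; rewrite (sum_single y) // => j hj.
    by rewrite mul_delta_r eq_sym (negbTE hj) mul0r mulr0.
  under eq_bigr do rewrite inner.
  rewrite -E2.
  case: (y' =P r y) => [->|hy].
    rewrite mulr_sumr; apply: eq_bigr => i _.
    rewrite !mul_delta_r !eqxx eps_s; ring.
  have ne : (y' == r y) = false by apply/eqP.
  by rewrite big1 // => i _; rewrite !mul_delta_r eqxx ne !mulr0.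
have R : \sum_i \sum_j eps kd i j *
     ((delta_mx i j *m g) x y * (delta_mx (r i) (r j) *m g) x' y') =
     if x' == r x then s x * (if r y == y' then s y else 0) else 0.
  rewrite (sum_single x) => [|i hi]; last first.
    by rewrite big1 // => j _; rewrite mul_delta_l eq_sym (negbTE hi) mul0r mulr0.
  rewrite -E1.
  case: (x' =P r x) => [->|hx].
    rewrite mulr_sumr; apply: eq_bigr => j _.
    rewrite !mul_delta_l !eqxx eps_s; ring.
  have ne : (x' == r x) = false by apply/eqP.
  by rewrite big1 // => j _; rewrite !mul_delta_l eqxx ne !mulr0.
rewrite L R [r x == x']eq_sym [r y == y']eq_sym.
case: (x' =P r x) => _; case: (y' =P r y) => _; by rewrite ?mulr0 // mulrC.
Qed.

Section Rho.
Variables (A : algType CC) (rho : 'M[CC]_N -> A).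
Hypothesis hrho : is_lie_hom kd rho.

Lemma lie0 : in_lie kd (0 : 'M[CC]_N).
Proof. by rewrite /in_lie trmx0 mul0mx mulmx0 addr0. Qed.

Lemma lieD (X Y : 'M[CC]_N) : in_lie kd X -> in_lie kd Y -> in_lie kd (X + Y).
Proof.
rewrite /in_lie => /eqP h1 /eqP h2.
by rewrite linearD mulmxDl mulmxDr addrACA h1 h2 addr0.
Qed.

Lemma lieZ c (X : 'M[CC]_N) : in_lie kd X -> in_lie kd (c *: X).
Proof.
rewrite /in_lie => /eqP h1.
by rewrite linearZ -scalemxAl -scalemxAr -scalerDr h1 scaler0.
Qed.

Lemma rho0 : rho 0 = 0.
Proof.
have := hrho.1 1 0 0 lie0 lie0; rewrite scaler0 addr0 scale1r => e.
have : rho 0 + rho 0 = rho 0 + 0 by rewrite addr0 -e.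
by move/addrI.
Qed.

Lemma rhoZ c X : in_lie kd X -> rho (c *: X) = c *: rho X.
Proof. by move=> h; have := hrho.1 c X 0 h lie0; rewrite !addr0 rho0 addr0. Qed.

Lemma rhoD X Y : in_lie kd X -> in_lie kd Y -> rho (X + Y) = rho X + rho Y.
Proof. by move=> h1 h2; have := hrho.1 1 X Y h1 h2; rewrite !scale1r. Qed.

Lemma rho_sum (I : finType) (X : I -> 'M[CC]_N) : (forall i, in_lie kd (X i)) ->
  in_lie kd (\sum_i X i) /\ rho (\sum_i X i) = \sum_i rho (X i).
Proof.
move=> h.
apply: (big_ind2 (fun M y => in_lie kd M /\ rho M = y)).
- by split; [exact: lie0 | exact: rho0].
- move=> M1 y1 M2 y2 [l1 e1] [l2 e2]; split; first exact: lieD.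
  by rewrite rhoD // e1 e2.
- by move=> i _; split.
Qed.

Lemma rho_dsum (X : 'I_N -> 'I_N -> 'M[CC]_N) (c : 'I_N -> 'I_N -> CC) :
  (forall k l, in_lie kd (X k l)) ->
  rho (\sum_k \sum_l c k l *: X k l) = \sum_k \sum_l c k l *: rho (X k l).
Proof.
move=> h.
have hk : forall k, in_lie kd (\sum_l c k l *: X k l) /\
   rho (\sum_l c k l *: X k l) = \sum_l rho (c k l *: X k l).
  by move=> k; apply: rho_sum => l; apply: lieZ.
rewrite (@rho_sum _ _ (fun k => (hk k).1)).2; apply: eq_bigr => k _.
rewrite (hk k).2; apply: eq_bigr => l _; exact: rhoZ.
Qed.


Lemma TF (x y : 'I_N) :
  \sum_(ij : 'I_N * 'I_N) (g *m delta_mx ij.1 ij.2) x y *: rho (Adj g (Fmx kd ij.2 ij.1)) =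
  \sum_(ij : 'I_N * 'I_N) (delta_mx ij.1 ij.2 *m g) x y *: rho (Fmx kd ij.2 ij.1).
Proof.
rewrite -(pair_bigA _ (fun i j => (g *m delta_mx i j) x y *: rho (Adj g (Fmx kd j i)))).
rewrite -(pair_bigA _ (fun i j => (delta_mx i j *m g) x y *: rho (Fmx kd j i))) /=.
have inner : forall i, \sum_j (g *m delta_mx i j) x y *: rho (Adj g (Fmx kd j i)) =
    g x i *: rho (Adj g (Fmx kd y i)).
  move=> i; rewrite (sum_single y) => [|j hj]; rewrite mul_delta_r ?eqxx //.
  by rewrite eq_sym (negbTE hj) scale0r.
under eq_bigr => i _ do rewrite inner /Adj invg FAd (@rho_dsum (fun k l => Fmx kd k l) _ lieF).
rewrite [RHS](sum_single x) => [|i hi]; last first.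
  by rewrite big1 // => j _; rewrite mul_delta_l eq_sym (negbTE hi) scale0r.
under eq_bigr => i _ do rewrite scaler_sumr.
rewrite exchange_big /=; apply: eq_bigr => k _.
under eq_bigr => i _ do rewrite scaler_sumr.
rewrite exchange_big /=.
have hsum : forall l, \sum_i g x i *: ((g k y * gi i l) *: rho (Fmx kd k l)) =
    (g k y * (x == l)%:R) *: rho (Fmx kd k l).
  move=> l; under eq_bigr do rewrite scalerA.
  rewrite -scaler_suml; congr (_ *: _).
  under eq_bigr do rewrite mulrCA.
  rewrite -mulr_sumr; congr (_ * _).
  by have := congr1 (fun M : 'M[CC]_N => M x l) ggi; rewrite !mxE => <-.
under eq_bigr do rewrite hsum.
rewrite (sum_single x) => [|l hl]; last by rewrite eq_sym (negbTE hl) mulr0 scale0r.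
by rewrite eqxx mulr1 mul_delta_l eqxx.
Qed.

End Rho.

End GMat.


Section Main.
Variables (kd : gkind) (N n : nat).
Hypothesis hN : kd = Sympl -> ~~ odd N.
Variable g : 'M[CC]_N.
Hypothesis hg : in_G kd g.
Variables (A : algType CC) (rho : 'M[CC]_N -> A).
Hypothesis hrho : is_lie_hom kd rho.

Local Notation Pg := (@tP A N n (fun _ => g)).
Local Notation r := (@rev_ord N).

Lemma prod_split1 (F : 'I_n -> CC) p : \prod_r F r = F p * \prod_(r | r != p) F r.
Proof. by rewrite (bigD1 p). Qed.

Lemma prod_split2 (F : 'I_n -> CC) p q : q != p ->
  \prod_r F r = F p * (F q * \prod_(r | (r != p) && (r != q)) F r).
Proof. by move=> h; rewrite (bigD1 p) // (bigD1 q) //=. Qed.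

Lemma intw_Q (p q : 'I_n) : q != p -> @intw A N n Pg (tQ A kd p q) (tQ A kd p q).
Proof.
move=> hqp.
rewrite /intw /tQ tmul_sumr tmul_suml; apply: tmx_ext => a b; rewrite /tsum.
under eq_bigr do rewrite tmulZr !tiota_tP !tP_mul.
under [RHS]eq_bigr do rewrite tmulZl !tiota_tP !tP_mul.
rewrite /tscale /tP.
under eq_bigr do rewrite scalerA.
under [RHS]eq_bigr do rewrite scalerA.
rewrite -!scaler_suml; congr (_ *: 1).
have hpq : (p == q) = false by rewrite eq_sym (negbTE hqp).
under eq_bigr do rewrite (prod_split2 _ p q hqp) !eqxx hpq (negbTE hqp).
under [RHS]eq_bigr do rewrite (prod_split2 _ p q hqp) !eqxx hpq (negbTE hqp).
have restL : forall ij : 'I_N * 'I_N, \prod_(r0 | (r0 != p) && (r0 != q))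
   (g *m ((if r0 == p then delta_mx ij.1 ij.2 else 1%:M) *m
     (if r0 == q then delta_mx (r ij.1) (r ij.2) else 1%:M))) (a r0) (b r0) =
   \prod_(r0 | (r0 != p) && (r0 != q)) g (a r0) (b r0).
  by move=> ij; apply: eq_bigr => r0 /andP [h1 h2]; rewrite (negbTE h1) (negbTE h2) !mulmx1.
have restR : forall ij : 'I_N * 'I_N, \prod_(r0 | (r0 != p) && (r0 != q))
   (((if r0 == p then delta_mx ij.1 ij.2 else 1%:M) *m
     (if r0 == q then delta_mx (r ij.1) (r ij.2) else 1%:M)) *m g) (a r0) (b r0) =
   \prod_(r0 | (r0 != p) && (r0 != q)) g (a r0) (b r0).
  by move=> ij; apply: eq_bigr => r0 /andP [h1 h2]; rewrite (negbTE h1) (negbTE h2) !mul1mx.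
under eq_bigr do rewrite restL.
under [RHS]eq_bigr do rewrite restR.
have fact : forall (e X Y R : CC), e * (X * (Y * R)) = e * (X * Y) * R by move=> *; ring.
under eq_bigr do rewrite fact.
under [RHS]eq_bigr do rewrite fact.
rewrite -!mulr_suml; congr (_ * _).
under eq_bigr do rewrite mulmx1 mul1mx.
under [RHS]eq_bigr do rewrite mulmx1 mul1mx.
exact: QI.
Qed.


Lemma tmul_trm' (M1 M : tmx A N n) (y : A) :
  tmul M1 (fun a b => M a b * y) = fun a b => tmul M1 M a b * y.
Proof. exact: tmul_trm. Qed.

Lemma trm_tmul' H (M : tmx A N n) (y : A) :
  tmul (fun a b => M a b * y) (tP A N n H) = fun a b => tmul M (tP A N n H) a b * y.
Proof. exact: trm_tmul. Qed.

Lemma intw_F u (p : 'I_n) :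
  @intw A N n Pg (tF kd (fun X => rho (Adj g X)) u p) (tF kd rho u p).
Proof.
apply: intw_add; first by apply: intw_scale; apply: intw_one.
rewrite /intw tmul_sumr tmul_suml; apply: tmx_ext => a b; rewrite /tsum.
under eq_bigr do rewrite tmul_trm' tiota_tP tP_mul.
under [RHS]eq_bigr do rewrite trm_tmul' tiota_tP tP_mul.
rewrite /tP.
under eq_bigr do rewrite -scalerAl mul1r (prod_split1 _ p) eqxx.
under [RHS]eq_bigr do rewrite -scalerAl mul1r (prod_split1 _ p) eqxx.
have restL : forall ij : 'I_N * 'I_N, \prod_(r0 | r0 != p)
   (g *m (if r0 == p then delta_mx ij.1 ij.2 else 1%:M)) (a r0) (b r0) =
   \prod_(r0 | r0 != p) g (a r0) (b r0).
  by move=> ij; apply: eq_bigr => r0 h1; rewrite (negbTE h1) mulmx1.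
have restR : forall ij : 'I_N * 'I_N, \prod_(r0 | r0 != p)
   ((if r0 == p then delta_mx ij.1 ij.2 else 1%:M) *m g) (a r0) (b r0) =
   \prod_(r0 | r0 != p) g (a r0) (b r0).
  by move=> ij; apply: eq_bigr => r0 h1; rewrite (negbTE h1) mul1mx.
under eq_bigr do rewrite restL mulrC -scalerA.
under [RHS]eq_bigr do rewrite restR mulrC -scalerA.
rewrite -!scaler_sumr; congr (_ *: _).
exact: TF.
Qed.


Lemma intw_YT (T : 'I_n -> nat * nat) : @intw A N n Pg (YT A T) (YT A T).
Proof.
rewrite /YT /tprod; apply: intw_big => p _; apply: intw_big => c _.
apply: intw_scale; apply: intw_add; last by apply: intw_scale; apply: intw_one.
rewrite /tJM; apply: intw_sum => q _; exact: tperm_comm.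
Qed.

Lemma intw_FT T u :
  @intw A N n Pg (FT kd (fun X => rho (Adj g X)) T u) (FT kd rho T u).
Proof.
rewrite /FT; apply: intw_mul; first exact: intw_YT.
rewrite /tprod; apply: intw_big => p _.
apply: intw_mul; last exact: intw_F.
apply: intw_add; first exact: intw_one.
apply: intw_scale; apply: intw_sum => q hq; apply: intw_Q.
by apply/eqP => e; rewrite e ltnn in hq.
Qed.

Lemma Zeval_inv (T : 'I_n -> nat * nat) u : Zeval kd rho T u = Zeval kd (fun X => rho (Adj g X)) T u.
Proof.
symmetry.
change (@ttr A N n (FT kd (fun X => rho (Adj g X)) T u) = @ttr A N n (FT kd rho T u)).
apply: (@ttr_intw A N n Pg (tP A N n (fun _ => gi kd N g)) _ _ (fun _ => g) erefl).
- by rewrite tP_mul gig // tP_one.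
- by rewrite tP_mul ggi // tP_one.
- exact: intw_FT.
Qed.

End Main.

Theorem proposition2p5 (kd : gkind) (N n : nat) (nu : seq nat)
    (T : 'I_n -> nat * nat) :
  (kd = Sympl -> ~~ odd N) ->
  is_partition n nu -> (size nu <= N)%N -> is_std_tableau nu T ->
  forall (A : algType CC) (rho : 'M[CC]_N -> A), is_lie_hom kd rho ->
  forall g : 'M[CC]_N, in_G kd g ->
  forall u : CC, (forall p : 'I_n, 2%:R * u + (content T p)%:~R != 0) ->
    Zeval kd rho T u = Zeval kd (fun X => rho (Adj g X)) T u.
Proof.
move=> hN _ _ _ A rho hrho g hg u _.
exact: Zeval_inv.
Qed.
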